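(* If $\mathcal{C}$ is a prevariety over a finite alphabet $A$, then $\mathit{SF}(\mathcal{C})$ is a prevariety closed under concatenation.
   Context: Fix a finite alphabet $A$. A prevariety is a class of regular languages over $A$ containing $\emptyset$ and $A^*$, closed under union, intersection, complement, and under the quotients $u^{-1}L=\{w\mid uw\in L\}$ and $Lu^{-1}=\{w\mid wu\in L\}$ for $u\in A^*$. $\mathit{SF}(\mathcal{C})$ is the least class containing $\mathcal{C}$ and all singletons $\{a\}$ ($a\in A$), closed under union, complement and concatenation. *)

(* Defs.v *)
From mathcomp Require Import all_boot.
Set Implicit Arguments. Unset Strict Implicit. Unset Printing Implicit Defensive.

(* Equality of languages is Leibniz equality of predicates, which
   (with functional and propositional extensionality) is set equality. *)
Definition lang (A : finType) := seq A -> Prop.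

Definition regular (A : finType) (L : lang A) : Prop :=
  exists (Q : finType) (q0 : Q) (delta : Q -> A -> Q) (F : pred Q),
    forall w, L w <-> F (foldl delta q0 w).

Definition lempty (A : finType) : lang A := fun _ => False.
Definition lfull (A : finType) : lang A := fun _ => True.
Definition lunion (A : finType) (L1 L2 : lang A) : lang A := fun w => L1 w \/ L2 w.
Definition linter (A : finType) (L1 L2 : lang A) : lang A := fun w => L1 w /\ L2 w.
Definition lcompl (A : finType) (L : lang A) : lang A := fun w => ~ L w.
Definition lsingle (A : finType) (a : A) : lang A := fun w => w = [:: a].
Definition lconcat (A : finType) (L1 L2 : lang A) : lang A :=
  fun w => exists u v, w = u ++ v /\ L1 u /\ L2 v.
Definition lquot_l (A : finType) (u : seq A) (L : lang A) : lang A := fun w => L (u ++ w).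
Definition lquot_r (A : finType) (L : lang A) (u : seq A) : lang A := fun w => L (w ++ u).

Definition prevariety (A : finType) (C : lang A -> Prop) : Prop :=
  (forall L, C L -> regular L) /\
  C (@lempty A) /\ C (@lfull A) /\
  (forall L1 L2, C L1 -> C L2 -> C (lunion L1 L2)) /\
  (forall L1 L2, C L1 -> C L2 -> C (linter L1 L2)) /\
  (forall L, C L -> C (lcompl L)) /\
  (forall u L, C L -> C (lquot_l u L)) /\
  (forall u L, C L -> C (lquot_r L u)).

Definition closed_under_concat (A : finType) (C : lang A -> Prop) : Prop :=
  forall L1 L2, C L1 -> C L2 -> C (lconcat L1 L2).

Inductive SF (A : finType) (C : lang A -> Prop) : lang A -> Prop :=
  | SF_base L : C L -> SF C L
  | SF_single (a : A) : SF C (lsingle a)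
  | SF_union L1 L2 : SF C L1 -> SF C L2 -> SF C (lunion L1 L2)
  | SF_compl L : SF C L -> SF C (lcompl L)
  | SF_concat L1 L2 : SF C L1 -> SF C L2 -> SF C (lconcat L1 L2).

(* Main.v *)
Require Import Defs.
From mathcomp Require Import all_boot.
From Stdlib Require Import Classical FunctionalExtensionality PropExtensionality.
Set Implicit Arguments. Unset Strict Implicit. Unset Printing Implicit Defensive.

Lemma lang_ext (A : finType) (L1 L2 : lang A) :
  (forall w, L1 w <-> L2 w) -> L1 = L2.
Proof.
move=> H; apply: functional_extensionality => w.
apply: propositional_extensionality; exact: H.
Qed.

Definition sdelta (A : finType) (a : A) (q : option bool) (x : A) : option bool :=
  if q is Some false then (if x == a then Some true else None) else None.

Lemma sdelta_none (A : finType) (a : A) w : foldl (sdelta a) None w = None.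
Proof. by elim: w. Qed.

Lemma reg_single (A : finType) (a : A) : regular (lsingle a).
Proof.
exists (option bool), (Some false), (sdelta a), (fun q => q == Some true).
move=> w; rewrite /lsingle; split.
  by move=> ->; rewrite /= eqxx.
case: w => [|x w] //=.
have [->|ne] := eqVneq x a; last by rewrite sdelta_none.

by case: w => [|y w] //=; rewrite sdelta_none.
Qed.

Lemma reg_compl (A : finType) (L : lang A) : regular L -> regular (lcompl L).
Proof.
move=> [Q [q0 [d [F H]]]]; exists Q, q0, d, (predC F) => w.
rewrite /lcompl /= H; split; first by move/negP.
by move/negP.
Qed.

Lemma foldl_pair (A : finType) (Q1 Q2 : Type) (d1 : Q1 -> A -> Q1) (d2 : Q2 -> A -> Q2) w p q :
  foldl (fun (s : Q1 * Q2) x => (d1 s.1 x, d2 s.2 x)) (p, q) w = (foldl d1 p w, foldl d2 q w).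
Proof. by elim: w p q => //= x w IH p q; rewrite IH. Qed.

Lemma reg_union (A : finType) (L1 L2 : lang A) :
  regular L1 -> regular L2 -> regular (lunion L1 L2).
Proof.
move=> [Q1 [p0 [d1 [F1 H1]]]] [Q2 [q0 [d2 [F2 H2]]]].
exists (Q1 * Q2)%type, (p0, q0), (fun (s : Q1 * Q2) x => (d1 s.1 x, d2 s.2 x)),
  (fun s => F1 s.1 || F2 s.2) => w.
rewrite foldl_pair /lunion /= H1 H2; split; first by case=> ->; rewrite ?orbT.
by case/orP; [left|right].
Qed.

Definition cdelta (A : finType) (Q1 Q2 : finType) (d1 : Q1 -> A -> Q1)
  (d2 : Q2 -> A -> Q2) (F1 : pred Q1) (q02 : Q2) (p : Q1 * {set Q2}) (x : A)
  : Q1 * {set Q2} :=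
  (d1 p.1 x, [set d2 s x | s in p.2] :|: (if F1 (d1 p.1 x) then [set q02] else set0)).

Lemma cdelta_inv (A : finType) (Q1 Q2 : finType) (d1 : Q1 -> A -> Q1)
  (d2 : Q2 -> A -> Q2) (F1 : pred Q1) (q01 : Q1) (q02 : Q2) w :
  let S := foldl (cdelta d1 d2 F1 q02) (q01, if F1 q01 then [set q02] else set0) w in
  S.1 = foldl d1 q01 w /\ forall s, (s \in S.2) <->
    exists u v, w = u ++ v /\ F1 (foldl d1 q01 u) /\ s = foldl d2 q02 v.
Proof.
elim/last_ind: w => [|w x [IH1 IH2]] /=.
  split=> // s; case: (boolP (F1 q01)) => h.
    rewrite in_set1; split; first by move/eqP->; exists [::], [::].
    by move=> [[|? ?] [[|? ?] [//= _ [_ ->]]]].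
  rewrite in_set0; split=> //.
  by move=> [[|? ?] [[|? ?] [//= _ [hF _]]]]; rewrite hF in h.
rewrite foldl_rcons /=; split; first by rewrite IH1 foldl_rcons.
move=> s; rewrite in_setU IH1; split.
  case/orP => [/imsetP [s0 Hs0 ->] | H].
    have [u [v [e [hF ->]]]] := (IH2 s0).1 Hs0.
    exists u, (rcons v x); split; first by rewrite e rcons_cat.
    by rewrite foldl_rcons.
  exists (rcons w x), [::]; rewrite cats0 foldl_rcons.
  by case: (F1 _) H; rewrite ?in_set0 ?in_set1 // => /eqP ->.
move=> [u [v [e [hF ->]]]].
case/lastP: v e => [|v y] e.
  apply/orP; right; move: e hF; rewrite cats0 => <-; rewrite foldl_rcons => ->.
  by rewrite in_set1.
move: e; rewrite -rcons_cat => /eqP; rewrite eqseq_rcons => /andP [/eqP e /eqP <-].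
apply/orP; left; apply/imsetP; exists (foldl d2 q02 v).
  by apply/(IH2 _).2; exists u, v.
by rewrite foldl_rcons.
Qed.

Lemma reg_concat (A : finType) (L1 L2 : lang A) :
  regular L1 -> regular L2 -> regular (lconcat L1 L2).
Proof.
move=> [Q1 [p0 [d1 [F1 H1]]]] [Q2 [q0 [d2 [F2 H2]]]].
exists (Q1 * {set Q2})%type, (p0, if F1 p0 then [set q0] else set0),
  (cdelta d1 d2 F1 q0), (fun p : Q1 * {set Q2} => [exists s in p.2, F2 s]) => w.
have [_ I] := cdelta_inv d1 d2 F1 p0 q0 w.
rewrite /lconcat; split.
  move=> [u [v [e [h1 h2]]]]; apply/existsP; exists (foldl d2 q0 v).
  apply/andP; split; last by rewrite -H2.
  by apply/(I _).2; exists u, v; rewrite -H1.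
case/existsP => s /andP [hs hF].
have [u [v [e [h1 e2]]]] := (I s).1 hs.
by exists u, v; rewrite H1 H2 -e2.
Qed.

Lemma SF_regular (A : finType) (C : lang A -> Prop) :
  prevariety C -> forall L, SF C L -> regular L.
Proof.
move=> [HR _] L; elim => {L}.
- by move=> L /HR.
- exact: reg_single.
- by move=> L1 L2 _ ? _ ?; apply: reg_union.
- by move=> L _ ?; apply: reg_compl.
- by move=> L1 L2 _ ? _ ?; apply: reg_concat.
Qed.

Definition lone (A : finType) (s : seq A) : lang A :=
  foldr (fun a L => lunion (lsingle a) L) (@lempty A) s.

Lemma lone_SF (A : finType) (C : lang A -> Prop) s :
  C (@lempty A) -> SF C (lone s).
Proof.
move=> H0; elim: s => [|a s IH] /=; first exact: SF_base.
by apply: SF_union => //; apply: SF_single.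
Qed.

Lemma lone_inv (A : finType) (s : seq A) w : lone s w -> exists a, w = [:: a].
Proof.
elim: s => [|a s IH] //= [->|/IH //]; by exists a.
Qed.

Lemma lone_mem (A : finType) (s : seq A) a : a \in s -> lone s [:: a].
Proof.
elim: s => [|b s IH] //=; rewrite in_cons => /orP [/eqP ->|/IH]; by [left|right].
Qed.

Definition leps (A : finType) : lang A := fun w => w = [::].

Lemma leps_SF (A : finType) (C : lang A -> Prop) :
  prevariety C -> SF C (@leps A).
Proof.
move=> [_ [H0 [H1 _]]].
have -> : @leps A = lcompl (lconcat (lone (enum A)) (@lfull A)).
  apply: lang_ext => w; rewrite /leps /lcompl /lconcat; split.
    by move=> -> [u [v [e [/lone_inv [a ea] _]]]]; rewrite ea in e.
  case: w => [|a w] // H; exfalso; apply: H.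
  by exists [:: a], w; split => //; split => //; apply: lone_mem; rewrite mem_enum.
apply: SF_compl; apply: SF_concat; [exact: lone_SF | exact: SF_base].
Qed.

Lemma SF_ql1 (A : finType) (C : lang A -> Prop) :
  prevariety C -> forall L, SF C L -> forall a, SF C (lquot_l [:: a] L).
Proof.
move=> HC; have [_ [H0 [_ [_ [_ [_ [HL _]]]]]]] := HC.
move=> L; elim => {L}.
- by move=> L HL' a; apply: SF_base; apply: HL.
- move=> b a; have [<-|ne] := eqVneq a b.
    have -> : lquot_l [:: a] (lsingle a) = @leps A.
      by apply: lang_ext => w; rewrite /lquot_l /lsingle /leps /=; split => [[]|->].
    exact: leps_SF.
  have -> : lquot_l [:: a] (lsingle b) = @lempty A.
    apply: lang_ext => w; rewrite /lquot_l /lsingle /lempty /=; split => // -[e _].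
    by rewrite e eqxx in ne.
  exact: SF_base.
- by move=> L1 L2 _ IH1 _ IH2 a; apply: (SF_union (IH1 a) (IH2 a)).
- by move=> L _ IH a; apply: (SF_compl (IH a)).
- move=> L1 L2 S1 IH1 S2 IH2 a.
  have E : forall w, lquot_l [:: a] (lconcat L1 L2) w <->
      lconcat (lquot_l [:: a] L1) L2 w \/ (L1 [::] /\ lquot_l [:: a] L2 w).
    move=> w; rewrite /lquot_l /lconcat /=; split.
      move=> [[|b u] [v [e [h1 h2]]]].
        by right; rewrite /= in e; rewrite e.
      case: e => eb ew; left; exists u, v; by rewrite ew eb.
    case=> [[u [v [-> [h1 h2]]]]|[h1 h2]].
      by exists (a :: u), v.
    by exists [::], (a :: w).
  case: (classic (L1 [::])) => h.
    have -> : lquot_l [:: a] (lconcat L1 L2) =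
       lunion (lconcat (lquot_l [:: a] L1) L2) (lquot_l [:: a] L2).
      apply: lang_ext => w; rewrite E /lunion; tauto.
    by apply: SF_union; [apply: SF_concat|].
  have -> : lquot_l [:: a] (lconcat L1 L2) = lconcat (lquot_l [:: a] L1) L2.
    apply: lang_ext => w; rewrite E; tauto.
  by apply: SF_concat.
Qed.

Lemma SF_ql (A : finType) (C : lang A -> Prop) :
  prevariety C -> forall u L, SF C L -> SF C (lquot_l u L).
Proof.
move=> HC; elim => [|a u IH] L HL //.
exact: (IH _ (SF_ql1 HC HL a)).
Qed.

Lemma SF_qr1 (A : finType) (C : lang A -> Prop) :
  prevariety C -> forall L, SF C L -> forall a, SF C (lquot_r L [:: a]).
Proof.
move=> HC; have [_ [H0 [_ [_ [_ [_ [_ HR]]]]]]] := HC.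
move=> L; elim => {L}.
- by move=> L HL' a; apply: SF_base; apply: HR.
- move=> b a; have [<-|ne] := eqVneq a b.
    have -> : lquot_r (lsingle a) [:: a] = @leps A.
      apply: lang_ext => w; rewrite /lquot_r /lsingle /leps /=; split => [|->//].
      by case: w => [|x [|y w]].
    exact: leps_SF.
  have -> : lquot_r (lsingle b) [:: a] = @lempty A.
    apply: lang_ext => w; rewrite /lquot_r /lsingle /lempty /=; split => //.
    case: w => [|x [|y w]] //= [e].
    by rewrite e eqxx in ne.
  exact: SF_base.
- by move=> L1 L2 _ IH1 _ IH2 a; apply: (SF_union (IH1 a) (IH2 a)).
- by move=> L _ IH a; apply: (SF_compl (IH a)).
- move=> L1 L2 S1 IH1 S2 IH2 a.
  have E : forall w, lquot_r (lconcat L1 L2) [:: a] w <->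
      lconcat L1 (lquot_r L2 [:: a]) w \/ (L2 [::] /\ lquot_r L1 [:: a] w).
    move=> w; rewrite /lquot_r /lconcat /=; split.
      move=> [u [v [e [h1 h2]]]].
      case/lastP: v e h2 => [|v y] e h2.
        by right; rewrite cats0 in e; rewrite e.
      move: e; rewrite !cats1 -rcons_cat => /eqP; rewrite eqseq_rcons.
      case/andP => /eqP -> /eqP ea; left; exists u, v; split => //; split => //.
      by rewrite cats1 ea.
    case=> [[u [v [-> [h1 h2]]]]|[h1 h2]].
      by exists u, (v ++ [:: a]); rewrite catA.
    by exists (w ++ [:: a]), [::]; rewrite cats0.
  case: (classic (L2 [::])) => h.
    have -> : lquot_r (lconcat L1 L2) [:: a] =
       lunion (lconcat L1 (lquot_r L2 [:: a])) (lquot_r L1 [:: a]).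
      apply: lang_ext => w; rewrite E /lunion; tauto.
    by apply: SF_union; [apply: SF_concat|].
  have -> : lquot_r (lconcat L1 L2) [:: a] = lconcat L1 (lquot_r L2 [:: a]).
    apply: lang_ext => w; rewrite E; tauto.
  by apply: SF_concat.
Qed.

Lemma SF_qr (A : finType) (C : lang A -> Prop) :
  prevariety C -> forall u L, SF C L -> SF C (lquot_r L u).
Proof.
move=> HC; elim => [|a u IH] L HL.
  by have -> : lquot_r L [::] = L by apply: lang_ext => w; rewrite /lquot_r cats0.
have -> : lquot_r L (a :: u) = lquot_r (lquot_r L u) [:: a].
  by apply: lang_ext => w; rewrite /lquot_r -catA.
exact: (SF_qr1 HC (IH _ HL) a).
Qed.

Theorem proposition3p2 (A : finType) (C : lang A -> Prop) :
  prevariety C -> prevariety (SF C) /\ closed_under_concat (SF C).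
Proof.
move=> HC; have [_ [H0 [H1 _]]] := HC.
split; last by move=> L1 L2; apply: SF_concat.
split; first exact: SF_regular.
split; first exact: SF_base.
split; first exact: SF_base.
split; first by move=> L1 L2; apply: SF_union.
split.
  move=> L1 L2 S1 S2.
  have -> : linter L1 L2 = lcompl (lunion (lcompl L1) (lcompl L2)).
    apply: lang_ext => w; rewrite /linter /lcompl /lunion; tauto.
  by apply/SF_compl/SF_union; apply: SF_compl.
split; first by move=> L; apply: SF_compl.
split; [exact: SF_ql | exact: SF_qr].
Qed.
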